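(* Let $T$ be Takagi's function on $[0,1]$, $T(x)=\sum_{n=1}^\infty 2^{-n}\phi^{(n)}(x)$, with $\phi$ the tent map $\phi(x)=2x$ on $[0,1/2]$, $\phi(x)=2-2x$ on $[1/2,1]$. Let $x\in(0,1)$ be non-dyadic, with binary expansion $x=\sum_{k\ge1}2^{-k}\varepsilon_k$, and write $x=\sum_{n\ge1}2^{-a_n}$, $1-x=\sum_{n\ge1}2^{-b_n}$ with $\{a_n\},\{b_n\}$ strictly increasing sequences of positive integers. Suppose the limit $d_1(x):=\lim_{n\to\infty}\frac1n\sum_{k=1}^n\varepsilon_k$ exists. If either (a) $0<d_1(x)<1/2$, or (b) $d_1(x)=0$ and $\limsup_{n\to\infty}a_{n+1}/a_n<2$, then $T'(x)=+\infty$. If either (a) $1/2<d_1(x)<1$, or (b) $d_1(x)=1$ and $\limsup_{n\to\infty}b_{n+1}/b_n<2$, then $T'(x)=-\infty$.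
   Context: $T'(x)=\pm\infty$ means the two-sided limit $\lim_{h\to0}(T(x+h)-T(x))/h$ equals $\pm\infty$. A dyadic point is one of the form $k/2^m$. *)

(* Defs.v *)
From Stdlib Require Import Reals Lra ZArith.
From Coquelicot Require Import Coquelicot.
Open Scope R_scope.

Definition tent (x : R) : R := if Rle_dec x (1/2) then 2 * x else 2 - 2 * x.

Definition tent_iter (n : nat) (x : R) : R := Nat.iter n tent x.

Definition takagi (x : R) : R :=
  Series (fun n : nat => / 2 ^ (S n) * tent_iter (S n) x).

Definition dyadic (x : R) : Prop := exists (k : Z) (m : nat), x = IZR k / 2 ^ m.

(* Main.v *)
Require Import Defs.
From Stdlib Require Import Reals ZArith Lra Lia.
From Coquelicot Require Import Coquelicot.
Open Scope R_scope.

Lemma tent_lip a b : Rabs (tent a - tent b) <= 2 * Rabs (a - b).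
Proof.
  unfold tent; destruct (Rle_dec a (1/2)); destruct (Rle_dec b (1/2));
  unfold Rabs; repeat destruct Rcase_abs; lra.
Qed.

Lemma tent_01 y : 0 <= y <= 1 -> 0 <= tent y <= 1.
Proof. unfold tent; destruct (Rle_dec y (1/2)); lra. Qed.

Lemma iter_S n y : tent_iter (S n) y = tent (tent_iter n y).
Proof. reflexivity. Qed.

Lemma iter_lip n a b : Rabs (tent_iter n a - tent_iter n b) <= 2 ^ n * Rabs (a - b).
Proof.
  induction n; simpl.
  - lra.
  - eapply Rle_trans. apply tent_lip. fold (tent_iter n a) (tent_iter n b).
    pose proof (pow_lt 2 n ltac:(lra)). nra.
Qed.

Lemma iter_01 n y : 0 <= y <= 1 -> 0 <= tent_iter n y <= 1.
Proof. intros H; induction n; simpl; [lra| apply tent_01; exact IHn]. Qed.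

Lemma iter_shift n y : tent_iter (S n) y = tent_iter n (tent y).
Proof.
  induction n. reflexivity.
  rewrite iter_S, IHn. reflexivity.
Qed.

Lemma tent_sym y : tent (1 - y) = tent y.
Proof. unfold tent; destruct (Rle_dec (1-y) (1/2)); destruct (Rle_dec y (1/2)); lra. Qed.

Lemma iter_sym n y : tent_iter (S n) (1 - y) = tent_iter (S n) y.
Proof. rewrite !iter_shift, tent_sym. reflexivity. Qed.

Lemma iter_parity j : forall y N, 0 <= y <= 1 -> IZR N <= 2 ^ j * y <= IZR N + 1 ->
  tent_iter j y = if Z.even N then 2 ^ j * y - IZR N else IZR N + 1 - 2 ^ j * y.
Proof.
  induction j; intros y N Hy HN.
  - simpl in *. assert (HN1: (N <= 1)%Z) by (apply le_IZR; lra).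
    assert (HN2: (-1 <= N)%Z) by (apply le_IZR; lra).
    assert (HH: (N = -1 \/ N = 0 \/ N = 1)%Z) by lia.
    destruct HH as [E|[E|E]]; rewrite E in *; simpl in *; lra.
  - set (K := (N / 2)%Z). set (r := (N - 2 * K)%Z).
    assert (Hr : (r = 0 \/ r = 1)%Z) by (unfold r, K; Z.div_mod_to_equations; lia).
    assert (HNr : N = (r + 2 * K)%Z) by (unfold r; lia).
    assert (HK : IZR K <= 2 ^ j * y <= IZR K + 1).
    { rewrite HNr, plus_IZR, mult_IZR in HN. simpl in HN.
      destruct Hr as [E|E]; rewrite E in HN; simpl in HN; lra. }
    rewrite iter_S, (IHj y K Hy HK).
    rewrite HNr, Z.even_add_mul_2, plus_IZR, mult_IZR.
    rewrite HNr, plus_IZR, mult_IZR in HN. simpl pow in *.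
    destruct Hr as [E|E]; rewrite E in *; simpl Z.even; simpl IZR in *;
    destruct (Z.even K); unfold tent; destruct Rle_dec; lra.
Qed.
Fixpoint psum (u : nat -> R) (n : nat) : R :=
  match n with O => 0 | S n' => psum u n' + u n' end.

Lemma psum_sum_n u n : sum_n u n = psum u (S n).
Proof.
  induction n.
  - rewrite sum_O. simpl. lra.
  - rewrite sum_Sn, IHn. simpl. unfold plus; simpl. lra.
Qed.

Lemma series_lim u l : is_series u l -> is_lim_seq (fun n => psum u (S n)) l.
Proof.
  intros H. apply is_lim_seq_ext with (sum_n u). intros; apply psum_sum_n. exact H.
Qed.

Lemma tail_series u l : is_series u l -> forall j, is_series (fun k => u (j + k)%nat) (l - psum u j).
Proof.
  intros H j. induction j.
  - simpl. apply is_series_ext with u. intros; reflexivity.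
    replace (l - 0) with l by lra. exact H.
  - apply is_series_ext with (fun k => (fun k => u (j + k)%nat) (S k)).
    { intros k. f_equal. lia. }
    apply (is_series_incr_1 (fun k => u (j + k)%nat)). simpl.
    match goal with |- is_series _ ?L => replace L with (l - psum u j) end.
    exact IHj. unfold plus; simpl. rewrite Nat.add_0_r. unfold plus; simpl. lra.
Qed.

Lemma series_lb u l B N0 : is_series u l -> (forall N, (N0 <= N)%nat -> B <= psum u N) -> B <= l.
Proof.
  intros H HB. apply series_lim in H.
  assert (Hc: is_lim_seq (fun _ : nat => B) B) by apply is_lim_seq_const.
  pose proof (is_lim_seq_le_loc (fun _ => B) (fun n => psum u (S n)) B l) as K.
  simpl in K. apply K; auto. exists N0. intros n Hn. apply (HB (S n)). lia.
Qed.

Lemma series_ub u l B N0 : is_series u l -> (forall N, (N0 <= N)%nat -> psum u N <= B) -> l <= B.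
Proof.
  intros H HB. apply series_lim in H.
  assert (Hc: is_lim_seq (fun _ : nat => B) B) by apply is_lim_seq_const.
  pose proof (is_lim_seq_le_loc (fun n => psum u (S n)) (fun _ => B) l B) as K.
  simpl in K. apply K; auto. exists N0. intros n Hn. apply (HB (S n)). lia.
Qed.

Lemma psum_le a b n : (forall k, a k <= b k) -> psum a n <= psum b n.
Proof. intros H; induction n; simpl; [lra|]. specialize (H n). lra. Qed.

Lemma series_le a b la lb : is_series a la -> is_series b lb -> (forall n, a n <= b n) -> la <= lb.
Proof.
  intros Ha Hb H. apply series_lim in Ha. apply series_lim in Hb.
  pose proof (is_lim_seq_le (fun n => psum a (S n)) (fun n => psum b (S n)) la lb) as K.
  apply K; auto. intros n; apply (psum_le a b (S n)); auto.
Qed.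

Lemma psum_nonneg u n : (forall k, 0 <= u k) -> 0 <= psum u n.
Proof. intros H; induction n; simpl; [lra|]. specialize (H n). lra. Qed.

Lemma series_first u l : is_series u l -> (forall k, 0 <= u k) -> u O <= l.
Proof.
  intros H Hu. apply (series_lb u l (u O) 1); auto.
  intros N HN. destruct N; [lia|]. simpl.
  clear HN. induction N; simpl; [lra|].
  simpl in IHN. pose proof (Hu (S N)). lra.
Qed.

Lemma geom_half j : is_series (fun k => / 2 ^ (S (j + k))) (/ 2 ^ j).
Proof.
  assert (H := is_series_geom (1/2)). rewrite Rabs_pos_eq in H by lra.
  specialize (H ltac:(lra)).
  apply (is_series_scal (/ 2 ^ (S j))) in H.
  match type of H with is_series _ ?L => replace L with (/2^j) in H end.
  2:{ unfold scal; cbn -[pow]; unfold mult; cbn -[pow].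
    rewrite <- Nat.add_1_r, pow_add. pose proof (pow_lt 2 j ltac:(lra)). field. lra. }
  eapply is_series_ext; [|exact H].
  intros n. unfold scal; cbn -[pow]; unfold mult; cbn -[pow].
  replace (1/2) with (/2) by lra.
  rewrite pow_inv. rewrite <- Nat.add_succ_l, pow_add. rewrite Rinv_mult. reflexivity.
Qed.

Definition term (y : R) (n : nat) : R := / 2 ^ (S n) * tent_iter (S n) y.

Lemma term_bound y n : 0 <= y <= 1 -> 0 <= term y n <= / 2 ^ (S n).
Proof.
  intros Hy. unfold term. pose proof (iter_01 (S n) y Hy).
  pose proof (pow_lt 2 (S n) ltac:(lra)). pose proof (Rinv_0_lt_compat _ H0).
  split; nra.
Qed.

Lemma takagi_series y : 0 <= y <= 1 -> is_series (term y) (takagi y).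
Proof.
  intros Hy. unfold takagi. apply Series_correct.
  apply (@ex_series_le R_AbsRing R_CompleteNormedModule) with (fun n => / 2 ^ (S (0 + n))).
  - intros n. pose proof (term_bound y n Hy). unfold term in H.
    change (Rabs (/ 2 ^ S n * tent_iter (S n) y) <= / 2 ^ S (0 + n)).
    rewrite Nat.add_0_l. rewrite Rabs_pos_eq; lra.
  - exists (/ 2 ^ 0). apply geom_half.
Qed.

Fixpoint Nd (eps : nat -> nat) (j : nat) : Z :=
  match j with O => 0%Z | S j' => (2 * Nd eps j' + Z.of_nat (eps (S j')))%Z end.
Definition tt (eps : nat -> nat) (x : R) (j : nat) : R := 2 ^ j * x - IZR (Nd eps j).
Fixpoint cnt (eps : nat -> nat) (n : nat) : R :=
  match n with O => 0 | S n' => cnt eps n' + INR (eps (S n')) end.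
Definition DD eps n := INR n - 2 * cnt eps n.

Definition digits (x : R) (eps : nat -> nat) :=
  (forall k, (1 <= k)%nat -> (eps k <= 1)%nat) /\
  is_series (fun k : nat => INR (eps (S k)) / 2 ^ (S k)) x.

Lemma IZR_Nd_S eps j : IZR (Nd eps (S j)) = 2 * IZR (Nd eps j) + INR (eps (S j)).
Proof. change (Nd eps (S j)) with (2 * Nd eps j + Z.of_nat (eps (S j)))%Z. rewrite plus_IZR, mult_IZR, INR_IZR_INZ. reflexivity. Qed.

Lemma tt_S eps x j : tt eps x (S j) = 2 * tt eps x j - INR (eps (S j)).
Proof. unfold tt. rewrite IZR_Nd_S. simpl pow. ring. Qed.

Lemma eps01 x eps k : digits x eps -> INR (eps (S k)) = 0 \/ INR (eps (S k)) = 1.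
Proof.
  intros [H _]. specialize (H (S k) ltac:(lia)).
  assert (eps (S k) = 0 \/ eps (S k) = 1)%nat as [E|E] by lia; rewrite E; simpl; auto.
Qed.

Lemma tt_rem x eps j : 2 ^ j * (x - psum (fun k => INR (eps (S k)) / 2 ^ (S k)) j) = tt eps x j.
Proof.
  induction j.
  - unfold tt; simpl. ring.
  - rewrite tt_S, <- IHj. simpl psum.
    assert (0 < 2 ^ j) by (apply pow_lt; lra).
    simpl pow. field. lra.
Qed.

Lemma tt_bounds x eps j : digits x eps -> 0 <= tt eps x j <= 1.
Proof.
  intros Hd. pose proof Hd as [H1 H2].
  rewrite <- tt_rem.
  pose proof (tail_series _ _ H2 j) as HT.
  assert (0 < 2 ^ j) by (apply pow_lt; lra).
  set (r := x - psum _ j) in *.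
  assert (0 <= r).
  { apply (series_lb _ r 0 0 HT). intros N _. apply psum_nonneg.
    intros k. apply Rmult_le_pos. apply pos_INR. left; apply Rinv_0_lt_compat, pow_lt; lra. }
  assert (r <= / 2 ^ j).
  { apply (series_le _ _ r _ HT (geom_half j)). intros k.
    destruct (eps01 x eps (j + k) Hd) as [E|E]; rewrite E; unfold Rdiv.
    - rewrite Rmult_0_l. left; apply Rinv_0_lt_compat, pow_lt; lra.
    - lra. }
  split. nra.
  apply Rmult_le_compat_l with (r := 2 ^ j) in H3; [|lra].
  rewrite Rinv_r in H3; lra.
Qed.

Lemma tt_strict x eps j : digits x eps -> ~ dyadic x -> 0 < tt eps x j < 1.
Proof.
  intros Hd Hnd. pose proof (tt_bounds x eps j Hd). unfold tt in *.
  assert (0 < 2 ^ j) by (apply pow_lt; lra).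
  split.
  - destruct (Req_dec (2 ^ j * x - IZR (Nd eps j)) 0) as [E|E]; [|lra].
    exfalso. apply Hnd. exists (Nd eps j), j. field_simplify; [|lra]. 
    apply Rmult_eq_reg_l with (2 ^ j); [|lra]. field_simplify; lra.
  - destruct (Req_dec (2 ^ j * x - IZR (Nd eps j)) 1) as [E|E]; [|lra].
    exfalso. apply Hnd. exists (Nd eps j + 1)%Z, j. rewrite plus_IZR.
    apply Rmult_eq_reg_l with (2 ^ j); [|lra]. field_simplify; lra.
Qed.

Definition In eps j y := IZR (Nd eps j) <= 2 ^ j * y <= IZR (Nd eps j) + 1.

Lemma In_S x eps j y : digits x eps -> In eps (S j) y -> In eps j y.
Proof.
  intros Hd. unfold In. rewrite IZR_Nd_S. simpl pow.
  destruct (eps01 x eps j Hd) as [E|E]; rewrite E; lra.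
Qed.

Lemma In_le x eps M y : digits x eps -> In eps M y -> forall j, (j <= M)%nat -> In eps j y.
Proof.
  intros Hd. induction M; intros HI j Hj.
  - assert (j = 0)%nat by lia. subst; auto.
  - destruct (Nat.eq_dec j (S M)) as [->|Hne]; auto.
    apply IHM; [eapply In_S; eauto | lia].
Qed.

Lemma In_x x eps j : digits x eps -> ~ dyadic x -> In eps j x.
Proof. intros Hd Hn. pose proof (tt_strict x eps j Hd Hn). unfold tt, In in *. lra. Qed.

Lemma iter_lin x eps k y : digits x eps -> ~ dyadic x -> 0 <= x <= 1 -> 0 <= y <= 1 ->
  In eps (S k) y ->
  tent_iter (S k) y - tent_iter (S k) x = 2 ^ (S k) * (1 - 2 * INR (eps (S k))) * (y - x).
Proof.
  intros Hd Hn Hx Hy HI. pose proof (In_x x eps (S k) Hd Hn) as HIx.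
  unfold In in *.
  rewrite (iter_parity (S k) y (Nd eps (S k)) Hy HI).
  rewrite (iter_parity (S k) x (Nd eps (S k)) Hx HIx).
  assert (He: (eps (S k) = 0 \/ eps (S k) = 1)%nat) by (destruct Hd as [H _]; specialize (H (S k)); lia).
  change (Nd eps (S k)) with (2 * Nd eps k + Z.of_nat (eps (S k)))%Z.
  rewrite Z.add_comm, Z.even_add_mul_2.
  destruct He as [E|E]; rewrite E; simpl Z.even; simpl INR; cbv iota; rewrite ?plus_IZR, ?mult_IZR; simpl Z.of_nat; simpl IZR; ring.
Qed.

Lemma ck_lin x eps k h : digits x eps -> ~ dyadic x -> 0 <= x <= 1 -> 0 <= x + h <= 1 -> h <> 0 ->
  In eps (S k) (x + h) ->
  (term (x + h) k - term x k) / h = 1 - 2 * INR (eps (S k)).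
Proof.
  intros Hd Hn Hx Hy Hh HI. unfold term.
  assert (0 < 2 ^ S k) by (apply pow_lt; lra).
  replace (/ 2 ^ S k * tent_iter (S k) (x + h) - / 2 ^ S k * tent_iter (S k) x)
    with (/ 2 ^ S k * (tent_iter (S k) (x + h) - tent_iter (S k) x)) by ring.
  rewrite (iter_lin x eps k (x + h) Hd Hn Hx Hy HI). field. lra.
Qed.

Lemma ck_bound1 x k h : h <> 0 -> Rabs ((term (x + h) k - term x k) / h) <= 1.
Proof.
  intros Hh. unfold term.
  assert (0 < 2 ^ S k) by (apply pow_lt; lra).
  pose proof (iter_lip (S k) (x + h) x) as L.
  replace (x + h - x) with h in L by ring.
  replace ((/ 2 ^ S k * tent_iter (S k) (x + h) - / 2 ^ S k * tent_iter (S k) x) / h)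
    with ((tent_iter (S k) (x + h) - tent_iter (S k) x) / (2 ^ S k * h)) by (field; lra).
  unfold Rdiv. rewrite Rabs_mult, Rabs_inv, Rabs_mult, (Rabs_pos_eq (2 ^ S k)) by lra.
  assert (0 < Rabs h) by (apply Rabs_pos_lt; auto).
  apply Rmult_le_reg_r with (2 ^ S k * Rabs h). nra.
  rewrite Rmult_assoc, Rinv_l by nra. lra.
Qed.

Lemma ck_bound2 x k h : h <> 0 -> 0 <= x <= 1 -> 0 <= x + h <= 1 ->
  Rabs ((term (x + h) k - term x k) / h) <= / 2 ^ S k / Rabs h.
Proof.
  intros Hh Hx Hy.
  pose proof (term_bound x k Hx). pose proof (term_bound (x + h) k Hy).
  assert (0 < Rabs h) by (apply Rabs_pos_lt; auto).
  unfold Rdiv. rewrite Rabs_mult, Rabs_inv.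
  apply Rmult_le_compat_r. left; apply Rinv_0_lt_compat; auto.
  unfold Rabs; destruct Rcase_abs; lra.
Qed.

Lemma abs_lb z a : Rabs z <= a -> - a <= z.
Proof. unfold Rabs; destruct Rcase_abs; lra. Qed.

Lemma quot_series x h : 0 <= x <= 1 -> 0 <= x + h <= 1 ->
  is_series (fun k => (term (x + h) k - term x k) / h) ((takagi (x + h) - takagi x) / h).
Proof.
  intros Hx Hy.
  pose proof (is_series_minus _ _ _ _ (takagi_series (x + h) Hy) (takagi_series x Hx)) as H.
  apply (is_series_scal (/ h)) in H.
  eapply is_series_ext; [|match type of H with is_series _ ?L => replace ((takagi (x + h) - takagi x) / h) with L; [exact H|] end].
  - intros n. unfold scal, plus, opp; simpl. unfold mult; simpl. unfold Rdiv. ring.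
  - unfold scal, plus, opp; simpl. unfold mult; simpl. unfold Rdiv. ring.
Qed.

Lemma main_bound x eps h M L : digits x eps -> ~ dyadic x -> 0 <= x <= 1 -> 0 <= x + h <= 1 ->
  h <> 0 -> In eps M (x + h) ->
  DD eps M - INR L - / 2 ^ (M + L) / Rabs h <= (takagi (x + h) - takagi x) / h.
Proof.
  intros Hd Hn Hx Hy Hh HI.
  set (c := fun k => (term (x + h) k - term x k) / h).
  assert (Hah : 0 < Rabs h) by (apply Rabs_pos_lt; auto).
  assert (P1 : forall N, (N <= M)%nat -> psum c N = DD eps N).
  { induction N; intros HN.
    - unfold DD; simpl. ring.
    - simpl psum. rewrite IHN by lia. unfold c.
      rewrite (ck_lin x eps N h Hd Hn Hx Hy Hh) by (apply (In_le x eps M); auto).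
      unfold DD. simpl cnt. rewrite S_INR. ring. }
  assert (P2 : forall i, DD eps M - INR i <= psum c (M + i)).
  { induction i.
    - rewrite Nat.add_0_r, P1 by lia. simpl. lra.
    - rewrite Nat.add_succ_r. simpl psum. rewrite S_INR.
      pose proof (abs_lb _ _ (ck_bound1 x (M + i) h Hh)). unfold c in *; lra. }
  assert (P3 : forall i, DD eps M - INR L - (/ 2 ^ (M + L) - / 2 ^ (M + L + i)) / Rabs h
                         <= psum c (M + L + i)).
  { induction i.
    - rewrite Nat.add_0_r. specialize (P2 L). replace (/ 2 ^ (M + L) - / 2 ^ (M + L)) with 0 by ring.
      unfold Rdiv. rewrite Rmult_0_l. lra.
    - rewrite Nat.add_succ_r. simpl psum.
      pose proof (abs_lb _ _ (ck_bound2 x (M + L + i) h Hh Hx Hy)). fold c in H.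
      replace (/ 2 ^ (M + L) - / 2 ^ S (M + L + i)) with
        ((/ 2 ^ (M + L) - / 2 ^ (M + L + i)) + / 2 ^ S (M + L + i)).
      2:{ simpl pow. assert (0 < 2 ^ (M + L + i)) by (apply pow_lt; lra). assert (0 < 2 ^ (M + L)) by (apply pow_lt; lra). field. lra. }
      unfold c in *. unfold Rdiv in *. rewrite Rmult_plus_distr_r. lra. }
  apply (series_lb c _ _ (M + L) (quot_series x h Hx Hy)).
  intros N HN. replace N with (M + L + (N - (M + L)))%nat by lia.
  eapply Rle_trans; [|apply P3].
  assert (0 < / 2 ^ (M + L + (N - (M + L)))) by (apply Rinv_0_lt_compat, pow_lt; lra).
  assert (0 < / Rabs h) by (apply Rinv_0_lt_compat; auto).
  unfold Rdiv. nra.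
Qed.

Require Import Stdlib.Logic.Classical.

Lemma search (P : nat -> Prop) n0 m : P n0 -> ~ P m -> (n0 <= m)%nat ->
  exists M, (n0 <= M)%nat /\ P M /\ ~ P (S M).
Proof.
  induction m; intros H0 Hm Hle.
  - assert (n0 = 0)%nat by lia. subst. contradiction.
  - destruct (classic (P m)) as [Hp|Hp].
    + exists m. repeat split; auto. destruct (Nat.eq_dec n0 (S m)); [subst; contradiction|lia].
    + apply IHm; auto. destruct (Nat.eq_dec n0 (S m)); [subst; contradiction|lia].
Qed.

Lemma pow2_gt n : INR n < 2 ^ n.
Proof. induction n; [simpl; lra|]. rewrite S_INR. simpl pow. assert (1 <= 2 ^ n) by (apply pow_R1_Rle; lra). lra. Qed.

Lemma pinv_pos n : 0 < / 2 ^ n.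
Proof. apply Rinv_0_lt_compat, pow_lt; lra. Qed.

Lemma pinv_le m n : (m <= n)%nat -> / 2 ^ n <= / 2 ^ m.
Proof. intros H. apply Rinv_le_contravar. apply pow_lt; lra. apply Rle_pow; lra || auto. Qed.

Lemma small_pow h : 0 < h -> exists m, / 2 ^ m < h.
Proof.
  intros Hh. destruct (INR_archimed h 1 Hh) as [n Hn]. exists n.
  pose proof (pow2_gt n). assert (0 < 2 ^ n) by (apply pow_lt; lra).
  apply Rmult_lt_reg_r with (2 ^ n); auto. rewrite Rinv_l by lra. nra.
Qed.

Lemma small_pow2 h n0 : 0 < h -> exists m, (n0 <= m)%nat /\ / 2 ^ m < h.
Proof.
  intros Hh. destruct (small_pow h Hh) as [m Hm]. exists (m + n0)%nat. split. lia.
  apply Rle_lt_trans with (/ 2 ^ m); [apply pinv_le; lia | exact Hm].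
Qed.

Lemma ineq_help a p q : 0 < p -> 0 < q -> a * / (2 * p) < / (p * q) -> a * q < 2.
Proof.
  intros Hp Hq H. apply Rmult_lt_compat_r with (r := 2 * p * q) in H; [|nra].
  replace (a * / (2 * p) * (2 * p * q)) with (a * q) in H by (field; lra).
  replace (/ (p * q) * (2 * p * q)) with 2 in H by (field; lra). exact H.
Qed.

Lemma pos_side x eps : digits x eps -> ~ dyadic x -> 0 < x < 1 ->
  forall n0, exists delta, 0 < delta /\ forall h, 0 < h < delta ->
  exists M K, (n0 <= M)%nat /\ DD eps M - INR K - 2 <= (takagi (x + h) - takagi x) / h /\
    (1 - tt eps x (S M)) * 2 ^ K < 2.
Proof.
  intros Hd Hn Hx n0.
  pose proof (tt_strict x eps n0 Hd Hn) as Ht0.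
  exists (Rmin (1 - x) (/ 2 ^ n0 * (1 - tt eps x n0))). split.
  { apply Rmin_pos. lra. pose proof (pinv_pos n0). nra. }
  intros h [Hh Hhd].
  assert (Hh1 : h < 1 - x) by (eapply Rlt_le_trans; [exact Hhd| apply Rmin_l]).
  assert (Hh2 : h < / 2 ^ n0 * (1 - tt eps x n0)) by (eapply Rlt_le_trans; [exact Hhd| apply Rmin_r]).
  destruct (small_pow2 h n0 Hh) as [m [Hm1 Hm2]].
  destruct (search (fun M => h <= / 2 ^ M * (1 - tt eps x M)) n0 m) as [M [HM1 [HM2 HM3]]]; auto.
  { lra. }
  { intros C. pose proof (tt_strict x eps m Hd Hn). pose proof (pinv_pos m). nra. }
  assert (HI : In eps M (x + h)).
  { pose proof (In_x x eps M Hd Hn). unfold In, tt in *.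
    assert (0 < 2 ^ M) by (apply pow_lt; lra).
    apply Rmult_le_compat_l with (r := 2 ^ M) in HM2; [|lra].
    rewrite <- Rmult_assoc, Rinv_r, Rmult_1_l in HM2 by lra. nra. }
  pose proof (tt_strict x eps M Hd Hn) as HtM.
  destruct (small_pow2 h 0 Hh) as [m2 [_ Hm3]].
  destruct (search (fun K => h < / 2 ^ (M + K)) 0 m2) as [K [_ [HK1 HK2]]].
  { rewrite Nat.add_0_r. pose proof (pinv_pos M). nra. }
  { intros C. pose proof (pinv_le m2 (M + m2) ltac:(lia)). lra. }
  { lia. }
  exists M, K. split; auto. split.
  - pose proof (main_bound x eps h M (S K) Hd Hn ltac:(lra) ltac:(lra) ltac:(lra) HI) as B.
    rewrite Rabs_pos_eq in B by lra. rewrite S_INR in B.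
    assert (/ 2 ^ (M + S K) / h <= 1).
    { apply Rnot_lt_le in HK2. cbv beta in HK2. unfold Rdiv.
      apply Rmult_le_reg_r with h; auto. rewrite Rmult_assoc, Rinv_l; lra. }
    lra.
  - apply Rnot_le_lt in HM3.
    assert (E: (1 - tt eps x (S M)) * / (2 * 2 ^ M) < / (2 ^ M * 2 ^ K)).
    { rewrite <- pow_add. replace (2 * 2 ^ M) with (2 ^ S M) by reflexivity. lra. }
    apply ineq_help in E; auto; apply pow_lt; lra.
Qed.

Lemma neg_side x eps : digits x eps -> ~ dyadic x -> 0 < x < 1 ->
  forall n0, exists delta, 0 < delta /\ forall h, - delta < h < 0 ->
  exists M K, (n0 <= M)%nat /\ DD eps M - INR K - 2 <= (takagi (x + h) - takagi x) / h /\
    tt eps x (S M) * 2 ^ K < 2.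
Proof.
  intros Hd Hn Hx n0.
  pose proof (tt_strict x eps n0 Hd Hn) as Ht0.
  exists (Rmin x (/ 2 ^ n0 * tt eps x n0)). split.
  { apply Rmin_pos. lra. pose proof (pinv_pos n0). nra. }
  intros h [Hhd Hh]. set (g := - h).
  assert (Hg : 0 < g) by (unfold g; lra).
  pose proof (Rmin_l x (/ 2 ^ n0 * tt eps x n0)). pose proof (Rmin_r x (/ 2 ^ n0 * tt eps x n0)).
  assert (Hh1 : g < x) by (unfold g; lra).
  assert (Hh2 : g < / 2 ^ n0 * tt eps x n0) by (unfold g; lra).
  destruct (small_pow2 g n0 Hg) as [m [Hm1 Hm2]].
  destruct (search (fun M => g <= / 2 ^ M * tt eps x M) n0 m) as [M [HM1 [HM2 HM3]]]; auto.
  { lra. }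
  { intros C. pose proof (tt_strict x eps m Hd Hn). pose proof (pinv_pos m). nra. }
  assert (HI : In eps M (x + h)).
  { pose proof (In_x x eps M Hd Hn). unfold In, tt in *.
    assert (0 < 2 ^ M) by (apply pow_lt; lra).
    apply Rmult_le_compat_l with (r := 2 ^ M) in HM2; [|lra].
    rewrite <- Rmult_assoc, Rinv_r, Rmult_1_l in HM2 by lra. unfold g in HM2. nra. }
  pose proof (tt_strict x eps M Hd Hn) as HtM.
  destruct (small_pow2 g 0 Hg) as [m2 [_ Hm3]].
  destruct (search (fun K => g < / 2 ^ (M + K)) 0 m2) as [K [_ [HK1 HK2]]].
  { rewrite Nat.add_0_r. pose proof (pinv_pos M). nra. }
  { intros C. pose proof (pinv_le m2 (M + m2) ltac:(lia)). lra. }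
  { lia. }
  exists M, K. split; auto. split.
  - pose proof (main_bound x eps h M (S K) Hd Hn ltac:(lra) ltac:(unfold g in *; lra) ltac:(lra) HI) as B.
    rewrite Rabs_left in B by lra. fold g in B. rewrite S_INR in B.
    assert (/ 2 ^ (M + S K) / g <= 1).
    { apply Rnot_lt_le in HK2. cbv beta in HK2. unfold Rdiv.
      apply Rmult_le_reg_r with g; auto. rewrite Rmult_assoc, Rinv_l; lra. }
    lra.
  - apply Rnot_le_lt in HM3.
    assert (E: tt eps x (S M) * / (2 * 2 ^ M) < / (2 ^ M * 2 ^ K)).
    { rewrite <- pow_add. replace (2 * 2 ^ M) with (2 ^ S M) by reflexivity. lra. }
    apply ineq_help in E; auto; apply pow_lt; lra.
Qed.

Lemma cnt_S x eps n : digits x eps -> cnt eps n <= cnt eps (S n) <= cnt eps n + 1.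
Proof. intros Hd. simpl. destruct (eps01 x eps n Hd) as [E|E]; rewrite E; lra. Qed.

Lemma ones_run x eps : digits x eps -> ~ dyadic x -> forall L n,
  (1 - tt eps x n) * 2 ^ L < 1 -> cnt eps (n + L) = cnt eps n + INR L.
Proof.
  intros Hd Hn L. induction L; intros n H.
  - rewrite Nat.add_0_r. simpl. ring.
  - assert (1 <= 2 ^ L) by (apply pow_R1_Rle; lra).
    pose proof (tt_strict x eps n Hd Hn). pose proof (tt_strict x eps (S n) Hd Hn).
    simpl pow in H. pose proof (tt_S eps x n) as TS.
    destruct (eps01 x eps n Hd) as [E|E]; rewrite E in TS.
    + exfalso. nra.
    + rewrite Nat.add_succ_r, <- Nat.add_succ_l, IHL.
      * simpl cnt. rewrite E, S_INR. ring.
      * rewrite TS. nra.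
Qed.

Lemma zeros_run x eps : digits x eps -> ~ dyadic x -> forall L n,
  tt eps x n * 2 ^ L < 1 -> cnt eps (n + L) = cnt eps n.
Proof.
  intros Hd Hn L. induction L; intros n H.
  - rewrite Nat.add_0_r. reflexivity.
  - assert (1 <= 2 ^ L) by (apply pow_R1_Rle; lra).
    pose proof (tt_strict x eps n Hd Hn). pose proof (tt_strict x eps (S n) Hd Hn).
    simpl pow in H. pose proof (tt_S eps x n) as TS.
    destruct (eps01 x eps n Hd) as [E|E]; rewrite E in TS.
    + rewrite Nat.add_succ_r, <- Nat.add_succ_l, IHL.
      * simpl cnt. rewrite E. ring.
      * rewrite TS. nra.
    + exfalso. nra.
Qed.

Lemma ones_run' x eps M K : digits x eps -> ~ dyadic x ->
  (1 - tt eps x (S M)) * 2 ^ K < 2 -> cnt eps M + INR K - 1 <= cnt eps (M + K).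
Proof.
  intros Hd Hn H. destruct K.
  - rewrite Nat.add_0_r. simpl. lra.
  - rewrite Nat.add_succ_r, <- Nat.add_succ_l, (ones_run x eps Hd Hn K (S M)).
    + pose proof (cnt_S x eps M Hd). rewrite S_INR. lra.
    + simpl pow in H. lra.
Qed.

Lemma zeros_run' x eps M K : digits x eps -> ~ dyadic x ->
  tt eps x (S M) * 2 ^ K < 2 -> cnt eps (M + K) <= cnt eps M + 1.
Proof.
  intros Hd Hn H. destruct K.
  - rewrite Nat.add_0_r. lra.
  - rewrite Nat.add_succ_r, <- Nat.add_succ_l, (zeros_run x eps Hd Hn K (S M)).
    + pose proof (cnt_S x eps M Hd). lra.
    + simpl pow in H. lra.
Qed.

Lemma a_mono (a : nat -> nat) : (forall n, (a n < a (S n))%nat) -> forall i n, (i <= n)%nat -> (a i <= a n)%nat.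
Proof.
  intros Ha i n H. induction H; auto. specialize (Ha m). lia.
Qed.

Lemma a_plus (a : nat -> nat) : (forall n, (a n < a (S n))%nat) -> forall p i, (a p + i <= a (p + i))%nat.
Proof.
  intros Ha p i. induction i. rewrite !Nat.add_0_r. lia.
  rewrite !Nat.add_succ_r. specialize (Ha (p + i)%nat). lia.
Qed.

Lemma pow2_IZR k : 2 ^ k = IZR (2 ^ Z.of_nat k).
Proof. rewrite <- pow_IZR. reflexivity. Qed.

Lemma a_int (a : nat -> nat) m : forall k, (forall i, (i < k)%nat -> (a i <= m)%nat) ->
  exists z, 2 ^ m * psum (fun i => / 2 ^ (a i)) k = IZR z.
Proof.
  induction k; intros H.
  - exists 0%Z. simpl. ring.
  - destruct IHk as [z Hz]. { intros i Hi. apply H. lia. }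
    exists (z + 2 ^ Z.of_nat (m - a k))%Z. simpl psum. rewrite plus_IZR, <- Hz, <- pow2_IZR.
    specialize (H k ltac:(lia)).
    replace m with ((m - a k) + a k)%nat at 1 2 by lia. rewrite pow_add.
    assert (0 < 2 ^ a k) by (apply pow_lt; lra).
    field. lra.
Qed.

Lemma a_tt x eps (a : nat -> nat) : digits x eps -> ~ dyadic x ->
  (forall n, (a n < a (S n))%nat) -> is_series (fun n => / 2 ^ (a n)) x ->
  forall n m, (a n <= m < a (S n))%nat -> 2 ^ m * / 2 ^ (a (S n)) <= tt eps x m.
Proof.
  intros Hd Hn Ha Hs n m Hm.
  set (P := psum (fun i => / 2 ^ (a i))).
  destruct (a_int a m (S n)) as [z Hz].
  { intros i Hi. pose proof (a_mono a Ha i n ltac:(lia)). lia. }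
  pose proof (tail_series _ _ Hs (S n)) as HT.
  assert (Hlo : / 2 ^ (a (S n)) <= x - P (S n)).
  { pose proof (series_first _ _ HT) as F. cbv beta in F. rewrite Nat.add_0_r in F. apply F.
    intros k. left; apply pinv_pos. }
  assert (Hhi : x - P (S n) <= / 2 ^ (a (S n) - 1)).
  { apply (series_le _ _ _ _ HT (geom_half (a (S n) - 1))). intros k.
    apply pinv_le. pose proof (a_plus a Ha (S n) k). lia. }
  assert (E2 : / 2 ^ (a (S n) - 1) = 2 * / 2 ^ (a (S n))).
  { replace (a (S n)) with (S (a (S n) - 1)) at 2 by lia. simpl pow.
    assert (0 < 2 ^ (a (S n) - 1)) by (apply pow_lt; lra). field. lra. }
  assert (E3 : 2 ^ (S m) <= 2 ^ (a (S n))) by (apply Rle_pow; [lra | lia]).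
  simpl pow in E3.
  assert (0 < 2 ^ m) by (apply pow_lt; lra).
  assert (0 < 2 ^ (a (S n))) by (apply pow_lt; lra).
  set (s := 2 ^ m * (x - P (S n))).
  assert (Hs1 : 2 ^ m * / 2 ^ (a (S n)) <= s) by (unfold s; nra).
  assert (Hs2 : s <= 1).
  { unfold s. rewrite E2 in Hhi.
    apply Rle_trans with (2 ^ m * (2 * / 2 ^ a (S n))). nra.
    apply Rmult_le_reg_r with (2 ^ a (S n)); auto.
    rewrite Rmult_1_l, !Rmult_assoc, Rinv_l by lra. lra. }
  pose proof (tt_strict x eps m Hd Hn) as Ht. unfold tt in *.
  assert (Hx : 2 ^ m * x = IZR z + s) by (unfold s, P in *; rewrite <- Hz; ring).
  assert (Hz1 : IZR (z - Nd eps m) < 1) by (rewrite minus_IZR; nra).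
  assert (Hz2 : -1 < IZR (z - Nd eps m)) by (rewrite minus_IZR; nra).
  apply lt_IZR in Hz1. apply lt_IZR in Hz2.
  assert (z = Nd eps m) by lia. subst z. lra.
Qed.

Lemma cnt_bounds eps (d : R) : is_lim_seq (fun n => cnt eps (S n) / INR (S n)) d ->
  forall e, 0 < e -> exists N, forall n, (N <= n)%nat ->
  (d - e) * INR n <= cnt eps n <= (d + e) * INR n.
Proof.
  intros H e He. apply is_lim_seq_spec in H. unfold is_lim_seq' in H. destruct (H (mkposreal e He)) as [N HN].
  exists (S N). intros n Hn. destruct n; [lia|].
  specialize (HN n ltac:(lia)). change (Rabs (cnt eps (S n) / INR (S n) - d) < e) in HN.
  assert (0 < INR (S n)) by (apply lt_0_INR; lia).
  set (r := cnt eps (S n) / INR (S n)) in *.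
  assert (E : cnt eps (S n) = r * INR (S n)) by (unfold r; field; lra).
  rewrite E. unfold Rabs in HN. destruct Rcase_abs in HN; split; nra.
Qed.

Lemma nat_big r : exists N, r < INR N.
Proof. destruct (INR_archimed 1 r ltac:(lra)) as [N HN]. exists N. lra. Qed.

Lemma pos_asym x eps d : digits x eps -> d < 1/2 ->
  is_lim_seq (fun n => cnt eps (S n) / INR (S n)) d ->
  forall B, exists n0, forall M K, (n0 <= M)%nat ->
    cnt eps M + INR K - 1 <= cnt eps (M + K) -> B < DD eps M - INR K - 2.
Proof.
  intros Hd Hdl Hl B. set (th := 1/2 - d).
  destruct (cnt_bounds eps d Hl (th / 2) ltac:(unfold th; lra)) as [N HN].
  destruct (nat_big ((B + 4) / th)) as [N2 HN2].
  exists (max N N2). intros M K HM HK.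
  destruct (HN (M + K)%nat ltac:(lia)) as [_ H1].
  rewrite plus_INR in H1.
  assert (INR N2 <= INR M) by (apply le_INR; lia).
  assert (0 <= INR K) by apply pos_INR.
  assert (B + 4 < INR N2 * th).
  { apply Rmult_lt_compat_r with (r := th) in HN2; [|unfold th; lra].
    replace ((B + 4) / th * th) with (B + 4) in HN2 by (field; unfold th; lra). lra. }
  unfold DD. unfold th in *. nra.
Qed.

Lemma neg_asym_a x eps d : digits x eps -> 0 < d < 1/2 ->
  is_lim_seq (fun n => cnt eps (S n) / INR (S n)) d ->
  forall B, exists n0, forall M K, (n0 <= M)%nat ->
    cnt eps (M + K) <= cnt eps M + 1 -> B < DD eps M - INR K - 2.
Proof.
  intros Hd Hdl Hl B. set (th := 1 - 2 * d). set (e := th * d / 16).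
  assert (Hth : 0 < th) by (unfold th; lra).
  assert (He : 0 < e) by (unfold e; nra).
  assert (He2 : e <= d / 2) by (unfold e, th; nra).
  destruct (cnt_bounds eps d Hl e He) as [N HN].
  destruct (nat_big ((B + 2 / d + 2) * 2 / th)) as [N2 HN2].
  exists (max N N2). intros M K HM HK.
  destruct (HN (M + K)%nat ltac:(lia)) as [H1 _].
  destruct (HN M ltac:(lia)) as [_ H2].
  rewrite plus_INR in H1.
  assert (INR N2 <= INR M) by (apply le_INR; lia).
  assert (0 <= INR K) by apply pos_INR.
  assert (0 <= INR M) by apply pos_INR.
  assert (Q3 : d / 2 * INR K <= 2 * e * INR M + 1) by nra.
  assert (Q4 : INR K <= th / 4 * INR M + 2 / d).
  { apply Rmult_le_reg_l with (d / 2). lra.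
    replace (d / 2 * (th / 4 * INR M + 2 / d)) with (th * d / 8 * INR M + 1) by (field; lra).
    unfold e in Q3. lra. }
  assert (Q5 : (B + 2 / d + 2) < th / 2 * INR M).
  { apply Rmult_lt_compat_r with (r := th / 2) in HN2; [|lra].
    replace ((B + 2 / d + 2) * 2 / th * (th / 2)) with (B + 2 / d + 2) in HN2 by (field; lra).
    nra. }
  assert (Q6 : 2 * e * INR M <= th / 16 * INR M).
  { unfold e. apply Rmult_le_compat_r; auto. nra. }
  assert (Eth : d * INR M = INR M / 2 - th * INR M / 2) by (unfold th; field).
  assert (0 <= th * INR M) by nra.
  unfold DD. lra.
Qed.

Lemma neg_asym_b x eps (a : nat -> nat) : digits x eps -> ~ dyadic x ->
  (forall n, (a n < a (S n))%nat) -> is_series (fun n => / 2 ^ (a n)) x ->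
  is_lim_seq (fun n => cnt eps (S n) / INR (S n)) 0 ->
  forall c n1, c < 2 -> (forall n, (n1 <= n)%nat -> INR (a (S n)) <= c * INR (a n)) ->
  forall B, exists n0, forall M K, (n0 <= M)%nat ->
    tt eps x (S M) * 2 ^ K < 2 -> B < DD eps M - INR K - 2.
Proof.
  intros Hd Hn Ha Hs Hl c n1 Hc Hcn B.
  assert (Hc0 : 0 < c).
  { specialize (Hcn n1 (le_n _)). specialize (Ha n1).
    assert (1 <= INR (a (S n1))) by (apply (le_INR 1); lia).
    pose proof (pos_INR (a n1)). nra. }
  set (e := (2 - c) / 4).
  destruct (cnt_bounds eps 0 Hl e ltac:(unfold e; lra)) as [N HN].
  destruct (nat_big ((B + c + 1) * 2 / (2 - c))) as [N2 HN2].
  exists (max (max N N2) (a n1)). intros M K HM HK.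
  destruct (HN M ltac:(lia)) as [_ H2].
  destruct (search (fun n => (a n <= S M)%nat) n1 (S (S M))) as [n [Hn1 [Hn2 Hn3]]].
  { cbv beta. lia. }
  { cbv beta. pose proof (a_plus a Ha 0 (S (S M))). simpl in H. lia. }
  { pose proof (a_plus a Ha 0 n1). simpl in H. lia. }
  cbv beta in Hn2, Hn3.
  pose proof (a_tt x eps a Hd Hn Ha Hs n (S M) ltac:(lia)) as Ht.
  assert (HKa : (S M + K < S (a (S n)))%nat).
  { destruct (le_lt_dec (S (a (S n))) (S M + K)) as [C|C]; auto. exfalso.
    apply (Rle_pow 2) in C; [|lra]. rewrite pow_add in C. simpl pow in C.
    assert (0 < 2 ^ a (S n)) by (apply pow_lt; lra).
    assert (0 < 2 ^ K) by (apply pow_lt; lra).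
    assert (0 < 2 ^ M) by (apply pow_lt; lra).
    simpl pow in Ht.
    apply Rmult_le_compat_r with (r := 2 ^ K) in Ht; [|lra].
    apply Rmult_le_compat_r with (r := 2 ^ a (S n)) in Ht; [|lra].
    replace (2 * 2 ^ M * / 2 ^ a (S n) * 2 ^ K * 2 ^ a (S n)) with (2 * 2 ^ M * 2 ^ K) in Ht
      by (field; lra).
    nra. }
  assert (HK2 : INR K + INR M + 1 <= INR (a (S n))).
  { rewrite <- plus_INR, <- S_INR. apply le_INR. lia. }
  assert (HK3 : INR (a n) <= INR M + 1) by (rewrite <- S_INR; apply le_INR; lia).
  specialize (Hcn n Hn1).
  assert (INR N2 <= INR M) by (apply le_INR; lia).
  assert (0 <= INR M) by apply pos_INR.
  assert (H5 : B + c + 1 < (2 - c) / 2 * INR M).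
  { apply Rmult_lt_compat_r with (r := (2 - c) / 2) in HN2; [|lra].
    replace ((B + c + 1) * 2 / (2 - c) * ((2 - c) / 2)) with (B + c + 1) in HN2 by (field; lra).
    nra. }
  unfold DD. unfold e in H2. nra.
Qed.

Lemma main_plus x eps (a : nat -> nat) (d : R) : digits x eps -> ~ dyadic x -> 0 < x < 1 ->
  (forall n, (a n < a (S n))%nat) -> is_series (fun n => / 2 ^ (a n)) x ->
  is_lim_seq (fun n => cnt eps (S n) / INR (S n)) d ->
  ((0 < d < 1/2) \/ (d = 0 /\ exists c n1, c < 2 /\
     forall n, (n1 <= n)%nat -> INR (a (S n)) <= c * INR (a n))) ->
  forall B, exists delta, 0 < delta /\ forall h, h <> 0 -> Rabs h < delta ->
    B < (takagi (x + h) - takagi x) / h.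
Proof.
  intros Hd Hn Hx Ha Hs Hl Hc B.
  assert (Hd2 : d < 1/2) by (destruct Hc as [[_ H]|[-> _]]; lra).
  destruct (pos_asym x eps d Hd Hd2 Hl B) as [n0p Hp].
  assert (Hneg : exists n0, forall M K, (n0 <= M)%nat ->
            tt eps x (S M) * 2 ^ K < 2 -> B < DD eps M - INR K - 2).
  { destruct Hc as [Hc|[E [c [n1 [Hc1 Hc2]]]]].
    - destruct (neg_asym_a x eps d Hd Hc Hl B) as [n0 H0]. exists n0.
      intros M K HM HK. apply H0; auto. apply (zeros_run' x eps M K Hd Hn HK).
    - subst d. apply (neg_asym_b x eps a Hd Hn Ha Hs Hl c n1 Hc1 Hc2 B). }
  destruct Hneg as [n0n Hn0].
  destruct (pos_side x eps Hd Hn Hx n0p) as [dp [Hdp Hps]].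
  destruct (neg_side x eps Hd Hn Hx n0n) as [dn [Hdn Hns]].
  exists (Rmin dp dn). split. apply Rmin_pos; auto.
  intros h Hh0 Hh. pose proof (Rmin_l dp dn). pose proof (Rmin_r dp dn).
  destruct (Rlt_or_le 0 h) as [Hpos|Hneg].
  - rewrite Rabs_pos_eq in Hh by lra.
    destruct (Hps h ltac:(lra)) as [M [K [HM [HQ HK]]]].
    pose proof (Hp M K HM (ones_run' x eps M K Hd Hn HK)). lra.
  - rewrite Rabs_left in Hh by lra.
    destruct (Hns h ltac:(lra)) as [M [K [HM [HQ HK]]]].
    pose proof (Hn0 M K HM HK). lra.
Qed.

Lemma locally0 (P : R -> Prop) : (exists d, 0 < d /\ forall h, h <> 0 -> Rabs h < d -> P h) ->
  Rbar_locally' (Finite 0) P.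
Proof.
  intros [d [Hd H]]. exists (mkposreal d Hd). intros y Hy Hne. apply H; auto.
  unfold ball in Hy; simpl in Hy. unfold AbsRing_ball, abs, minus, plus, opp in Hy; simpl in Hy.
  rewrite Ropp_0, Rplus_0_r in Hy. exact Hy.
Qed.

Lemma sumf_cnt eps n : sum_f 1 (S n) (fun k => INR (eps k)) = cnt eps (S n).
Proof.
  unfold sum_f. replace (S n - 1)%nat with n by lia.
  induction n.
  - simpl. ring.
  - change (sum_f_R0 (fun x : nat => INR (eps (x + 1)%nat)) n + INR (eps (S n + 1)%nat) = cnt eps (S (S n))).
    rewrite IHn, Nat.add_1_r. reflexivity.
Qed.

Lemma limsup_bound (a : nat -> nat) : (forall n, (1 <= a n)%nat) ->
  Rbar_lt (LimSup_seq (fun n => INR (a (S n)) / INR (a n))) (Finite 2) ->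
  exists c n1, c < 2 /\ forall n, (n1 <= n)%nat -> INR (a (S n)) <= c * INR (a n).
Proof.
  intros Ha1 H. unfold LimSup_seq in H. destruct (ex_LimSup_seq (fun n => INR (a (S n)) / INR (a n))) as [l Hl].
  simpl in H.
  assert (Hu : exists c N, c < 2 /\ forall n, (N <= n)%nat -> INR (a (S n)) / INR (a n) < c).
  { destruct l as [r| |]; simpl in H, Hl.
    - assert (Hp : 0 < (2 - r) / 2) by lra.
      destruct (Hl (mkposreal _ Hp)) as [_ [N HN]]. exists (r + (2 - r) / 2), N. split. lra.
      intros n Hn. apply HN; auto.
    - contradiction.
    - destruct (Hl 1) as [N HN]. exists 1, N. split. lra. auto. }
  destruct Hu as [c [N [Hc HN]]]. exists c, N. split; auto. intros n Hn.
  specialize (HN n Hn). assert (0 < INR (a n)) by (apply lt_0_INR; specialize (Ha1 n); lia).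
  apply Rmult_lt_compat_r with (r := INR (a n)) in HN; auto.
  unfold Rdiv in HN. rewrite Rmult_assoc, Rinv_l in HN by lra. lra.
Qed.

Lemma takagi_sym y : takagi (1 - y) = takagi y.
Proof. unfold takagi. apply Series_ext. intros n. rewrite iter_sym. reflexivity. Qed.

Lemma cnt_compl eps n : (forall k, (1 <= k)%nat -> (eps k <= 1)%nat) ->
  cnt (fun k => (1 - eps k)%nat) n = INR n - cnt eps n.
Proof.
  intros H. induction n.
  - simpl. ring.
  - change (cnt (fun k => (1 - eps k)%nat) n + INR ((1 - eps (S n))%nat) = INR (S n) - (cnt eps n + INR (eps (S n)))).
    rewrite IHn, S_INR. specialize (H (S n) ltac:(lia)).
    rewrite minus_INR by lia. simpl. ring.
Qed.

Theorem corollary2 (x : R) (eps : nat -> nat) (a b : nat -> nat) (d : R) :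
  0 < x < 1 ->
  ~ dyadic x ->
  (forall k, (1 <= k)%nat -> (eps k <= 1)%nat) ->
  is_series (fun k : nat => INR (eps (S k)) / 2 ^ (S k)) x ->
  (forall n, (1 <= a n)%nat) -> (forall n, (a n < a (S n))%nat) ->
  (forall n, (1 <= b n)%nat) -> (forall n, (b n < b (S n))%nat) ->
  is_series (fun n : nat => / 2 ^ (a n)) x ->
  is_series (fun n : nat => / 2 ^ (b n)) (1 - x) ->
  is_lim_seq (fun n : nat => sum_f 1 (S n) (fun k => INR (eps k)) / INR (S n)) d ->
  (((0 < d < 1/2) \/
     (d = 0 /\ Rbar_lt (LimSup_seq (fun n => INR (a (S n)) / INR (a n))) (Finite 2))) ->
    is_lim (fun h => (takagi (x + h) - takagi x) / h) 0 p_infty)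
  /\
  (((1/2 < d < 1) \/
     (d = 1 /\ Rbar_lt (LimSup_seq (fun n => INR (b (S n)) / INR (b n))) (Finite 2))) ->
    is_lim (fun h => (takagi (x + h) - takagi x) / h) 0 m_infty).
Proof.
  intros Hx Hnd Heps Hser Ha1 Ha Hb1 Hb Hsa Hsb Hlim.
  assert (Hd : digits x eps) by (split; auto).
  assert (Hl : is_lim_seq (fun n => cnt eps (S n) / INR (S n)) d).
  { eapply is_lim_seq_ext; [|exact Hlim]. intros n. simpl. rewrite sumf_cnt. reflexivity. }
  split.
  - intros Hc. apply is_lim_spec. intros M. apply locally0.
    apply (main_plus x eps a d Hd Hnd Hx Ha Hsa Hl).
    destruct Hc as [Hc|[E Hc]]; [left; auto| right; split; auto].
    apply limsup_bound; auto.
  - intros Hc. apply is_lim_spec. intros M. apply locally0.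
    set (eps' := fun k => (1 - eps k)%nat).
    assert (Hd' : digits (1 - x) eps').
    { split.
      - intros k _. unfold eps'. lia.
      - pose proof (is_series_minus _ _ _ _ (geom_half 0) Hser) as H.
        match type of H with is_series _ ?L => replace L with (1 - x) in H end.
        2:{ unfold plus, opp; simpl. field. }
        eapply is_series_ext; [|exact H].
        intros n. unfold plus, opp; simpl. unfold eps'.
        rewrite minus_INR by (apply Heps; lia). simpl INR. unfold Rdiv. ring. }
    assert (Hnd' : ~ dyadic (1 - x)).
    { intros [k [m E]]. apply Hnd. exists (2 ^ Z.of_nat m - k)%Z, m.
      rewrite minus_IZR, <- pow2_IZR. assert (0 < 2 ^ m) by (apply pow_lt; lra).
      replace x with (1 - (1 - x)) at 1 by ring. rewrite E. field. lra. }
    assert (Hl' : is_lim_seq (fun n => cnt eps' (S n) / INR (S n)) (1 - d)).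
    { pose proof (is_lim_seq_minus' _ _ _ _ (is_lim_seq_const 1) Hl) as H.
      eapply is_lim_seq_ext; [|exact H]. intros n. unfold eps'.
      rewrite cnt_compl by auto. assert (0 < INR (S n)) by (apply lt_0_INR; lia).
      field. lra. }
    destruct (main_plus (1 - x) eps' b (1 - d) Hd' Hnd' ltac:(lra) Hb Hsb Hl') with (B := - M)
      as [delta [Hdelta H]].
    { destruct Hc as [Hc|[E Hc]]; [left; lra| right; split; [lra|]].
      apply limsup_bound; auto. }
    exists delta. split; auto. intros h Hh0 Hh.
    specialize (H (- h) ltac:(lra) ltac:(rewrite Rabs_Ropp; exact Hh)).
    rewrite <- (takagi_sym (x + h)), <- (takagi_sym x).
    replace (1 - (x + h)) with (1 - x + - h) by ring.
    replace ((takagi (1 - x + - h) - takagi (1 - x)) / h) with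
      (- ((takagi (1 - x + - h) - takagi (1 - x)) / - h)) by (field; auto).
    lra.
Qed.
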